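(* Let $a,b,k\in\mathbb{N}$ with $k\le\min(a,b)$. Then $(\mathcal{A}_k([a]\times[b]),\le_k)\cong\mathcal{D}_k([a]\times[b])$ as posets.
   Context: $[n]=\{1,\dots,n\}$, and $[a]\times[b]$ and $\mathbb{Z}_+^2$ carry the product order. For a finite poset $P$, $\mathcal{A}_k(P)$ is the set of antichains of $P$ of size $k$; for $A,B\in\mathcal{A}_k(P)$, $A\prec_k B$ means $A\setminus B=\{a\}$, $B\setminus A=\{b\}$ are singletons with $a<_P b$, and $\le_k$ is the reflexive transitive closure of $\prec_k$. A Ferrers diagram is a finite order ideal of $\mathbb{Z}_+^2$; its Durfee length is the largest $k$ with $[k]\times[k]\subseteq D$. $\mathcal{D}_k([a]\times[b])$ is the set of Ferrers diagrams of Durfee length exactly $k$ contained in $[a]\times[b]$, ordered by inclusion. *)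

(* Defs.v *)
From mathcomp Require Import all_boot.
Set Implicit Arguments. Unset Strict Implicit. Unset Printing Implicit Defensive.

(* The grid [a] x [b], indexed from 0: (i,j) : 'I_a * 'I_b stands for (i+1,j+1). *)
Definition grid (a b : nat) := ('I_a * 'I_b)%type.

Section Grid.
Variables a b : nat.

Definition gle (x y : grid a b) : bool := (x.1 <= y.1) && (x.2 <= y.2).
Definition glt (x y : grid a b) : bool := (x != y) && gle x y.

Definition antichain (A : {set grid a b}) : bool :=
  [forall x in A, forall y in A, (x != y) ==> ~~ gle x y].
Definition antichains_k (k : nat) : pred {set grid a b} :=
  fun A => antichain A && (#|A| == k).

Definition prec_k (k : nat) (A B : {set grid a b}) : bool :=
  [&& A \in antichains_k k, B \in antichains_k k &
   [exists x, exists y, [&& A :\: B == [set x], B :\: A == [set y] & glt x y]]].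

Definition le_k (k : nat) (A B : {set grid a b}) : bool := connect (prec_k k) A B.

Definition ferrers (D : {set grid a b}) : bool :=
  [forall x, forall y, (gle x y && (y \in D)) ==> (x \in D)].

Definition has_square (D : {set grid a b}) (m : nat) : bool :=
  [&& m <= a, m <= b & [forall x : grid a b, ((x.1 < m) && (x.2 < m)) ==> (x \in D)]].

Definition durfee (D : {set grid a b}) : nat :=
  \max_(m < (minn a b).+1 | has_square D m) m.

Definition diagrams_k (k : nat) : pred {set grid a b} :=
  fun D => ferrers D && (durfee D == k).
End Grid.

(* Main.v *)
Require Import Defs.
From mathcomp Require Import all_boot zify.
From Stdlib Require Import Classical.
Set Implicit Arguments. Unset Strict Implicit. Unset Printing Implicit Defensive.

Section Basics.
Variables a b : nat.
Local Notation G := (grid a b).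
Implicit Types (A B S : {set G}) (pi : G -> nat) (p q x y : G).

Definition NP (A : {set G}) (pi : G -> nat) (t : nat) := #|[set p in A | t <= pi p]|.
Definition px (p : G) : nat := p.1.
Definition py (p : G) : nat := p.2.

Lemma NP0 A pi : NP A pi 0 = #|A|.
Proof. by rewrite /NP; apply: eq_card => p; rewrite !inE andbT. Qed.

Lemma NP_mono A pi t s : t <= s -> NP A pi s <= NP A pi t.
Proof.
move=> ts; apply: subset_leq_card; apply/subsetP => p; rewrite !inE.
by case/andP=> -> h; apply: leq_trans h.
Qed.

Lemma NP_le_card A pi t : NP A pi t <= #|A|.
Proof. by rewrite -(NP0 A pi); apply: NP_mono. Qed.

Lemma NP_big A pi n t : (forall p, pi p < n) -> n <= t -> NP A pi t = 0.
Proof.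
move=> hp nt; apply/eqP; rewrite cards_eq0; apply/eqP/setP => p; rewrite !inE.
have := hp p; case: (leqP t (pi p)) => //= h1 h2; lia.
Qed.

Lemma card_interval (S : {set G}) pi t s :
  {in S &, injective pi} -> (forall p, p \in S -> t <= pi p < s) -> #|S| <= s - t.
Proof.
move=> inj hS; rewrite cardE -(size_map pi) -(size_iota t (s - t)).
apply: uniq_leq_size.
  by rewrite map_inj_in_uniq ?enum_uniq // => x y; rewrite !mem_enum; apply: inj.
move=> y /mapP [x]; rewrite mem_enum => /hS h ->.
by rewrite mem_iota; lia.
Qed.

Lemma NP_lip (A : {set G}) pi t s : {in A &, injective pi} -> NP A pi t <= NP A pi s + (s - t).
Proof.
move=> inj; case: (leqP s t) => st.
  by apply: leq_trans (NP_mono _ _ st) (leq_addr _ _).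
rewrite /NP.
have -> : [set p in A | t <= pi p] = [set p in A | s <= pi p] :|: [set p in A | t <= pi p < s].
  apply/setP => p; rewrite !inE; case: (p \in A) => //=.
  case: (leqP s (pi p)) => h /=; lia.
apply: leq_trans (leq_card_setU _ _) _; rewrite leq_add2l.
apply: card_interval.
  by move=> x y; rewrite !inE => /andP[xA _] /andP[yA _]; apply: inj.
by move=> p; rewrite !inE => /andP[].
Qed.

Lemma NP_strict A pi p t s : p \in A -> t <= pi p -> pi p < s -> NP A pi s < NP A pi t.
Proof.
move=> pA tp ps; apply: proper_card; rewrite properE; apply/andP; split.
  apply/subsetP => q; rewrite !inE => /andP[-> h]; lia.
apply/subsetPn; exists p; rewrite !inE ?pA ?tp //=; lia.
Qed.

Lemma NP_U1 S pi x t : x \notin S -> NP (x |: S) pi t = NP S pi t + (t <= pi x).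
Proof.
move=> xS; rewrite /NP.
have -> : [set p in x |: S | t <= pi p] =
   [set p in S | t <= pi p] :|: [set p in [set x] | t <= pi p].
  by apply/setP => p; rewrite !inE; case: (p == x); case: (p \in S); case: (t <= pi p).
rewrite cardsU.
have -> : [set p in S | t <= pi p] :&: [set p in [set x] | t <= pi p] = set0.
  apply/setP => p; rewrite !inE; case: (boolP (p == x)) => [/eqP ->|_]; by rewrite ?(negbTE xS) ?andbF.
rewrite cards0 subn0; congr (_ + _).
case: (leqP t (pi x)) => h /=.
  by rewrite -(cards1 x); apply: eq_card => p; rewrite !inE; case: (boolP (p == x)) => [/eqP ->|_]; rewrite ?h ?andbF.
by apply/eqP; rewrite cards_eq0; apply/eqP/setP => p; rewrite !inE; case: (boolP (p == x)) => [/eqP ->|_]; rewrite ?andbF // leqNgt h.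
Qed.

Lemma antiP A p q : antichain A -> p \in A -> q \in A -> p != q -> ~~ gle p q.
Proof. by move=> /forall_inP /(_ p) h pA qA; move: (h pA) => /forall_inP /(_ q qA) /implyP; apply. Qed.

Lemma anti_ltx A p q : antichain A -> p \in A -> q \in A -> px p < px q -> py q < py p.
Proof.
move=> hA pA qA lt; have pq : p != q by apply/eqP => e; move: lt; rewrite e ltnn.
have := antiP hA pA qA pq; rewrite /gle /px /py in lt *; rewrite (ltnW lt) /= -ltnNge; done.
Qed.

Lemma anti_lty A p q : antichain A -> p \in A -> q \in A -> py p < py q -> px q < px p.
Proof.
move=> hA pA qA lt; have pq : p != q by apply/eqP => e; move: lt; rewrite e ltnn.
have := antiP hA pA qA pq.
rewrite /gle /px /py in lt *; rewrite (ltnW lt) andbT -ltnNge; done.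
Qed.

Lemma anti_injx A : antichain A -> {in A &, injective px}.
Proof.
move=> hA p q pA qA e; apply/eqP; apply/negPn/negP => pq.
case: (ltngtP (py p) (py q)) => h.
- by have := anti_lty hA pA qA h; rewrite e ltnn.
- by have := anti_lty hA qA pA h; rewrite e ltnn.
- by have := antiP hA pA qA pq; rewrite /gle -/(px p) -/(px q) -/(py p) -/(py q) e h !leqnn.
Qed.

Lemma anti_injy A : antichain A -> {in A &, injective py}.
Proof.
move=> hA p q pA qA e; apply/eqP; apply/negPn/negP => pq.
case: (ltngtP (px p) (px q)) => h.
- by have := anti_ltx hA pA qA h; rewrite e ltnn.
- by have := anti_ltx hA qA pA h; rewrite e ltnn.
- by have := antiP hA pA qA pq; rewrite /gle -/(px p) -/(px q) -/(py p) -/(py q) e h !leqnn.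
Qed.


Definition fmap A := [set q : G | (px q < NP A py (py q - px q)) || (py q < NP A px (px q - py q))].

Lemma akP k A : reflect (antichain A /\ #|A| = k) (A \in antichains_k k).
Proof. by rewrite unfold_in /antichains_k; apply: (iffP andP) => [[h /eqP]|[h ->]]. Qed.

Lemma fmap_ferrers A : antichain A -> ferrers (fmap A).
Proof.
move=> hA; have ix := anti_injx hA; have iy := anti_injy hA.
apply/forallP => x; apply/forallP => y; apply/implyP => /andP[/andP[h1 h2]].
rewrite !inE => /orP[h|h]; apply/orP; [left|right].
- have l1 := NP_lip (py y - px y) (py x - px x) iy.
  have l2 := @NP_mono A py (py y - px y) (py x - px x).
  rewrite /px /py in h l1 l2 *; lia.
- have l1 := NP_lip (px y - py y) (px x - py x) ix.
  have l2 := @NP_mono A px (px y - py y) (px x - py x).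
  rewrite /px /py in h l1 l2 *; lia.
Qed.

Lemma fmap_square k A : k <= minn a b -> A \in antichains_k k -> has_square (fmap A) k.
Proof.
move=> hk /akP[hA cA]; have iy := anti_injy hA.
apply/and3P; split; [lia|lia|].
apply/forallP => x; apply/implyP => /andP[x1 x2]; rewrite inE; apply/orP; left.
have l1 := NP_lip 0 (py x - px x) iy; rewrite NP0 cA in l1.
rewrite /px /py in l1 *; lia.
Qed.

Lemma fmap_notkk k A (q : G) : A \in antichains_k k -> px q = k -> py q = k -> q \notin fmap A.
Proof.
move=> /akP[hA cA] e1 e2; rewrite inE e1 e2 subnn !NP0 cA ltnn; done.
Qed.

Lemma fmap_diag k A : k <= minn a b -> A \in antichains_k k -> fmap A \in diagrams_k k.
Proof.
move=> hk hAk; have [hA cA] := akP _ _ hAk.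
rewrite unfold_in /diagrams_k fmap_ferrers //=; apply/eqP/anti_leq/andP; split.
  apply/bigmax_leqP => m /and3P[ma mb /forallP hm]; rewrite leqNgt; apply/negP => km.
  have ka : k < a by lia.
  have kb : k < b by lia.
  have := hm (Ordinal ka, Ordinal kb); rewrite /= km /= => hin.
  by have := fmap_notkk (q := (Ordinal ka, Ordinal kb)) hAk erefl erefl; rewrite hin.
have hk' : k < (minn a b).+1 by lia.
exact: (leq_bigmax_cond (F := fun m : 'I_(minn a b).+1 => nat_of_ord m) (Ordinal hk') (fmap_square hk hAk)).
Qed.

Lemma NP_swap A B x y pi t : A :\: B = [set x] -> B :\: A = [set y] -> pi x <= pi y ->
  NP A pi t <= NP B pi t.
Proof.
move=> hAB hBA le.
have eA : A = x |: (A :&: B).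
  apply/setP => q; move/setP: hAB => /(_ q); rewrite !inE.
  by case: (q \in A); case: (q \in B) => //= <-; rewrite ?orbF.
have eB : B = y |: (A :&: B).
  apply/setP => q; move/setP: hBA => /(_ q); rewrite !inE.
  by case: (q \in A); case: (q \in B) => //= <-; rewrite ?orbF.
have xn : x \notin A :&: B.
  by apply/negP => xAB; move/setP: hAB => /(_ x); rewrite !inE eqxx; move: xAB; rewrite inE => /andP[-> ->].
have yn : y \notin A :&: B.
  by apply/negP => yAB; move/setP: hBA => /(_ y); rewrite !inE eqxx; move: yAB; rewrite inE => /andP[-> ->].
rewrite eA {2}eB !NP_U1 // leq_add2l.
case: (leqP t (pi x)) => h //=; by rewrite (leq_trans h le).
Qed.

Lemma prec_sub k A B : prec_k k A B -> fmap A \subset fmap B.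
Proof.
case/and3P => _ _ /existsP[x /existsP[y /and3P[/eqP hAB /eqP hBA /andP[_ /andP[l1 l2]]]]].
apply/subsetP => q; rewrite !inE => /orP[h|h]; apply/orP; [left|right].
- by apply: leq_trans h (NP_swap _ hAB hBA l2).
- by apply: leq_trans h (NP_swap _ hAB hBA l1).
Qed.

Lemma le_sub k A B : le_k k A B -> fmap A \subset fmap B.
Proof.
case/connectP => s; elim: s A => [|c s IH] A /= => [_ ->|/andP[hc hp] hl]; first exact: subxx.
exact: subset_trans (prec_sub hc) (IH c hp hl).
Qed.

Lemma dom_y k A B t : A \in antichains_k k -> B \in antichains_k k -> k <= minn a b ->
  fmap A \subset fmap B -> NP A py t <= NP B py t.
Proof.
move=> /akP[hA cA] /akP[hB cB] hk /subsetP sub.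
set n := NP A py t.
case: (posnP n) => [->//|n0].
have l1 := NP_lip t b (anti_injy hA).
rewrite (@NP_big A py b b) // in l1; last by move=> p; rewrite /py ltn_ord.
have l2 := NP_le_card A py t.
have h1 : n.-1 < a by rewrite /n; lia.
have h2 : t + n.-1 < b by rewrite /n; lia.
have inA : (Ordinal h1, Ordinal h2) \in fmap A.
  by rewrite inE /px /py /= addnK -/n; apply/orP; left; lia.
have := sub _ inA; rewrite !inE /px /py /= addnK.
have -> : n.-1 - (t + n.-1) = 0 by lia.
rewrite !NP0 cB => /orP[h|h]; first by lia.
have l3 := NP_lip 0 t (anti_injy hB); rewrite NP0 cB in l3.
clear inA; rewrite /n /py /px in n0 h1 h2 h l2 l3 *; lia.
Qed.

Lemma dom_x k A B t : A \in antichains_k k -> B \in antichains_k k -> k <= minn a b ->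
  fmap A \subset fmap B -> NP A px t <= NP B px t.
Proof.
move=> /akP[hA cA] /akP[hB cB] hk /subsetP sub.
set n := NP A px t.
case: (posnP n) => [->//|n0].
have l1 := NP_lip t a (anti_injx hA).
rewrite (@NP_big A px a a) // in l1; last by move=> p; rewrite /px ltn_ord.
have l2 := NP_le_card A px t.
have h1 : t + n.-1 < a by rewrite /n; lia.
have h2 : n.-1 < b by rewrite /n; lia.
have inA : (Ordinal h1, Ordinal h2) \in fmap A.
  by rewrite inE /px /py /= addnK -/n; apply/orP; right; lia.
have := sub _ inA; rewrite !inE /px /py /= addnK.
have -> : n.-1 - (t + n.-1) = 0 by lia.
rewrite !NP0 cB => /orP[h|h]; last by lia.
have l3 := NP_lip 0 t (anti_injx hB); rewrite NP0 cB in l3.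
clear inA; rewrite /n /py /px in n0 h1 h2 h l2 l3 *; lia.
Qed.


Lemma anti_split A p : antichain A -> p \in A -> NP A py (py p) + NP A px (px p).+1 = #|A|.
Proof.
move=> hA pA; rewrite -(cardsID [set q | px p < px q] A) addnC; congr (_ + _); apply: eq_card => q; rewrite !inE //.
rewrite [RHS]andbC; case qA: (q \in A) => //=; case: (ltngtP (px q) (px p)) => h.
- by rewrite (ltnW (anti_ltx hA qA pA h)).
- by rewrite leqNgt (anti_ltx hA pA qA h).
- by rewrite (anti_injx hA qA pA h) leqnn.
Qed.

Lemma pair_eq (p q : G) : px p = px q -> py p = py q -> p = q.
Proof.
case: p => [p1 p2]; case: q => [q1 q2]; rewrite /px /py /= => e1 e2.
by rewrite (val_inj e1) (val_inj e2).
Qed.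

Lemma eq_counts_sub A B : antichain A -> antichain B ->
  (forall t, NP A px t = NP B px t) -> (forall t, NP A py t = NP B py t) -> A \subset B.
Proof.
move=> hA hB ex ey; apply/subsetP => p pA.
case: (boolP [exists q in B, px q == px p]) => [/exists_inP [q qB /eqP e1]|none].
  have s1 := anti_split hA pA; have s2 := anti_split hB qB.
  have cAB : #|A| = #|B| by rewrite -(NP0 A px) -(NP0 B px) ex.
  rewrite e1 in s2.
  have e3 : NP A py (py p) = NP A py (py q) by rewrite (ey (py q)); rewrite ex in s1; lia.
  case: (ltngtP (py p) (py q)) => h.
  - by have := NP_strict pA (leqnn _) h; rewrite e3 ltnn.
  - have := NP_strict qB (leqnn _) h; rewrite -!ey e3 ltnn //.
  - by rewrite (pair_eq e1 (esym h)) in qB.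
have e4 : NP B px (px p) = NP B px (px p).+1.
  apply: eq_card => q; rewrite !inE; case qB: (q \in B) => //=.
  rewrite leq_eqVlt; case: eqP => //= e; move/exists_inP: none => none; exfalso; apply: none; exists q => //; by rewrite e.
have := NP_strict pA (leqnn _) (ltnSn (px p)).
by rewrite !ex e4 ltnn.
Qed.

Lemma eq_counts A B : antichain A -> antichain B ->
  (forall t, NP A px t = NP B px t) -> (forall t, NP A py t = NP B py t) -> A = B.
Proof.
move=> hA hB ex ey; apply/eqP; rewrite eqEsubset !eq_counts_sub //.
Qed.

Lemma sum_lt n (f g : nat -> nat) i : i < n -> (forall s, f s <= g s) -> f i < g i ->
  \sum_(s < n) f s < \sum_(s < n) g s.
Proof.
move=> hi hfg hlt; rewrite (bigD1 (Ordinal hi)) //= [X in _ < X](bigD1 (Ordinal hi)) //=.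
rewrite -addSn; apply: leq_add => //; apply: leq_sum => s _; exact: hfg.
Qed.

Definition W A := \sum_(s < a.+1) NP A px s + \sum_(s < b.+1) NP A py s.


Lemma step_x k A B t0 : A \in antichains_k k -> B \in antichains_k k ->
  (forall t, NP A px t <= NP B px t) -> (forall t, NP A py t <= NP B py t) ->
  NP A px t0 < NP B px t0 ->
  exists2 A', prec_k k A A' & [/\ A' \in antichains_k k, (forall t, NP A' px t <= NP B px t),
     (forall t, NP A' py t <= NP B py t) & W A < W A'].
Proof.
move=> hAk hBk dx dy lt0; have [hA cA] := akP _ _ hAk; have [hB cB] := akP _ _ hBk.
have bndB : forall s, NP A px s < NP B px s -> s < a.
  move=> s h; rewrite ltnNge; apply/negP => as_.
  by rewrite (@NP_big B px a s) // in h; move=> p; rewrite /px ltn_ord.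
have exP : exists s, NP A px s < NP B px s by exists t0.
have ub : forall s, NP A px s < NP B px s -> s <= a by move=> s /bndB /ltnW.
have [t Pt tmax] := ex_maxnP (P := fun s => NP A px s < NP B px s) exP ub.
have ta : t < a := bndB t Pt.
have e1 : NP A px t = NP A px t.+1.
  have n1 : NP B px t.+1 <= NP A px t.+1.
    by rewrite leqNgt; apply/negP => /tmax; rewrite ltnn.
  have := NP_lip t t.+1 (anti_injx hB); have := @NP_mono A px t t.+1 (leqnSn t); have := dx t.+1.
  move: Pt n1; lia.
have noT : forall q, q \in A -> px q != t.
  move=> q qA; apply/eqP => e; have := NP_strict qA (leqnn _) (ltnSn (px q)).
  by rewrite e e1 ltnn.
have exq : exists u, [exists q in A, (px q == u) && (u < t)].
  have : [exists q in A, px q < t].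
    case: (boolP [exists q in A, px q < t]) => // none; exfalso.
    have : NP A px t = #|A|.
      rewrite -(NP0 A px); apply: eq_card => q; rewrite !inE; case qA: (q \in A) => //=.
      rewrite leqNgt; apply/negP => h; move/negP: none; apply; apply/exists_inP; by exists q.
    have := NP_le_card B px t; move: Pt; rewrite cA cB; lia.
  by case/exists_inP => q qA h; exists (px q); apply/exists_inP; exists q; rewrite ?eqxx.
have ubu : forall u, [exists q in A, (px q == u) && (u < t)] -> u <= t.
  by move=> u /exists_inP[q _ /andP[_ /ltnW]].
have [u /exists_inP[p pA /andP[/eqP pu ut]] umax] := ex_maxnP exq ubu.
have below : forall q, q \in A -> px q < t -> px q <= px p.
  by move=> q qA h; rewrite pu; apply: umax; apply/exists_inP; exists q; rewrite ?eqxx.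
pose p' : G := (Ordinal ta, p.2).
have p'A : p' \notin A by apply/negP => h; have := noT _ h; rewrite /px /= eqxx.
have pp' : p != p'.
  by apply/eqP => e; move: ut; rewrite -pu e /px /= ltnn.
have side : forall q, q \in A -> q != p ->
   (px q < px p /\ py p < py q) \/ (t < px q /\ py q < py p).
  move=> q qA qp; case: (ltngtP (px q) (px p)) => h.
  - by left; split => //; exact: anti_ltx hA qA pA h.
  - right; split; last exact: anti_ltx hA pA qA h.
    have := noT q qA; case: (ltnP (px q) t) => h2; last by move/eqP => h3; clear -h2 h3 h; lia.
    by have := below q qA h2 => h4; clear -h h4; lia.
  - by move: qp; rewrite (anti_injx hA qA pA h) eqxx.
pose A' := p' |: (A :\ p).
have hA' : antichain A'.
  apply/forall_inP => q1 h1; apply/forall_inP => q2 h2; apply/implyP => ne.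
  move: h1 h2; rewrite !inE => /orP[/eqP e1'|/andP[q1p q1A]] /orP[/eqP e2'|/andP[q2p q2A]].
  - by rewrite e1' e2' eqxx in ne.
  - subst q1; have := side q2 q2A q2p; rewrite /gle /=.
    by case => -[h1 h2]; apply/negP => /andP[l1 l2]; rewrite /px /py /= in h1 h2 l1 l2 ut pu; clear -h1 h2 l1 l2 ut pu; lia.
  - subst q2; have := side q1 q1A q1p; rewrite /gle /=.
    by case => -[h1 h2]; apply/negP => /andP[l1 l2]; rewrite /px /py /= in h1 h2 l1 l2 ut pu; clear -h1 h2 l1 l2 ut pu; lia.
  - exact: antiP hA q1A q2A ne.
have p'Ap : p' \notin A :\ p by rewrite in_setD1 (negbTE p'A) andbF.
have cA' : #|A'| = k.
  by rewrite cardsU1 p'Ap /= -cA (cardsD1 p A) pA.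
have hA'k : A' \in antichains_k k by apply/akP.
have NPx : forall s, NP A' px s = NP (A :\ p) px s + (s <= t).
  by move=> s; rewrite NP_U1.
have NPAx : forall s, NP A px s = NP (A :\ p) px s + (s <= px p).
  by move=> s; rewrite -{1}(setD1K pA) NP_U1 ?setD11.
have NPy : forall s, NP A' py s = NP A py s.
  by move=> s; rewrite NP_U1 // -{2}(setD1K pA) NP_U1 ?setD11.
exists A'.
  apply/and3P; split => //; apply/existsP; exists p; apply/existsP; exists p'; apply/and3P; split.
  - apply/eqP/setP => q; rewrite !inE; case: (boolP (q == p)) => [/eqP->|qp] /=.
      by rewrite pA (negbTE pp').
    by case: (q \in A); rewrite ?orbT ?andbF.
  - apply/eqP/setP => q; rewrite !inE; case: (boolP (q == p')) => [/eqP->|qp'] /=.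
      by rewrite (negbTE p'A).
    by case: (q \in A); rewrite ?andbF.
  - rewrite /glt pp' /gle /= leqnn andbT; move: pu ut; rewrite /px => -> /ltnW //.
have hpt : px p < t by rewrite pu.
split => //.
- move=> s; rewrite NPx; case: (leqP s (px p)) => h1.
    by have := NPAx s; rewrite h1 (leq_trans h1 (ltnW hpt)) => <-.
  case: (leqP s t) => h2 /=.
    have es : NP A px s = NP A px t.
      apply: eq_card => q; rewrite !inE; case qA: (q \in A) => //=.
      case: (ltnP (px q) t) => h3.
        by have := below q qA h3; move=> h4; apply/negP => h5; clear -h1 h4 h5; lia.
      by rewrite (leq_trans h2 h3).
    have := NPAx s; rewrite leqNgt h1 /= addn0 => <-; rewrite es.
    by rewrite addn1; exact: leq_trans Pt (NP_mono _ _ h2).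
  have := NPAx s; rewrite leqNgt (ltn_trans hpt h2) /= addn0 => <-. exact: dx.
- by move=> s; rewrite NPy.
- rewrite /W; have -> : \sum_(s < b.+1) NP A' py s = \sum_(s < b.+1) NP A py s.
    by apply: eq_bigr => s _; rewrite NPy.
  rewrite ltn_add2r; apply: (@sum_lt a.+1 (fun s => NP A px s) (fun s => NP A' px s) t).
  + exact: ltnW.
  + move=> s; rewrite NPx NPAx leq_add2l; case: (leqP s (px p)) => //= h.
    by rewrite (leq_trans h (ltnW hpt)).
  + by rewrite NPx NPAx leqnn (leqNgt t (px p)) hpt /= addn0 addn1.
Qed.

Lemma step_y k A B t0 : A \in antichains_k k -> B \in antichains_k k ->
  (forall t, NP A py t <= NP B py t) -> (forall t, NP A px t <= NP B px t) ->
  NP A py t0 < NP B py t0 ->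
  exists2 A', prec_k k A A' & [/\ A' \in antichains_k k, (forall t, NP A' py t <= NP B py t),
     (forall t, NP A' px t <= NP B px t) & W A < W A'].
Proof.
move=> hAk hBk dy dx lt0; have [hA cA] := akP _ _ hAk; have [hB cB] := akP _ _ hBk.
have bndB : forall s, NP A py s < NP B py s -> s < b.
  move=> s h; rewrite ltnNge; apply/negP => as_.
  by rewrite (@NP_big B py b s) // in h; move=> p; rewrite /py ltn_ord.
have exP : exists s, NP A py s < NP B py s by exists t0.
have ub : forall s, NP A py s < NP B py s -> s <= b by move=> s /bndB /ltnW.
have [t Pt tmax] := ex_maxnP (P := fun s => NP A py s < NP B py s) exP ub.
have tb : t < b := bndB t Pt.
have e1 : NP A py t = NP A py t.+1.
  have n1 : NP B py t.+1 <= NP A py t.+1.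
    by rewrite leqNgt; apply/negP => /tmax; rewrite ltnn.
  have := NP_lip t t.+1 (anti_injy hB); have := @NP_mono A py t t.+1 (leqnSn t); have := dy t.+1.
  move: Pt n1; lia.
have noT : forall q, q \in A -> py q != t.
  move=> q qA; apply/eqP => e; have := NP_strict qA (leqnn _) (ltnSn (py q)).
  by rewrite e e1 ltnn.
have exq : exists u, [exists q in A, (py q == u) && (u < t)].
  have : [exists q in A, py q < t].
    case: (boolP [exists q in A, py q < t]) => // none; exfalso.
    have : NP A py t = #|A|.
      rewrite -(NP0 A py); apply: eq_card => q; rewrite !inE; case qA: (q \in A) => //=.
      rewrite leqNgt; apply/negP => h; move/negP: none; apply; apply/exists_inP; by exists q.
    have := NP_le_card B py t; move: Pt; rewrite cA cB; lia.
  by case/exists_inP => q qA h; exists (py q); apply/exists_inP; exists q; rewrite ?eqxx.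
have ubu : forall u, [exists q in A, (py q == u) && (u < t)] -> u <= t.
  by move=> u /exists_inP[q _ /andP[_ /ltnW]].
have [u /exists_inP[p pA /andP[/eqP pu ut]] umax] := ex_maxnP exq ubu.
have below : forall q, q \in A -> py q < t -> py q <= py p.
  by move=> q qA h; rewrite pu; apply: umax; apply/exists_inP; exists q; rewrite ?eqxx.
pose p' : G := (p.1, Ordinal tb).
have p'A : p' \notin A by apply/negP => h; have := noT _ h; rewrite /py /= eqxx.
have pp' : p != p'.
  by apply/eqP => e; move: ut; rewrite -pu e /py /= ltnn.
have side : forall q, q \in A -> q != p ->
   (py q < py p /\ px p < px q) \/ (t < py q /\ px q < px p).
  move=> q qA qp; case: (ltngtP (py q) (py p)) => h.
  - by left; split => //; exact: anti_lty hA qA pA h.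
  - right; split; last exact: anti_lty hA pA qA h.
    have := noT q qA; case: (ltnP (py q) t) => h2; last by move/eqP => h3; clear -h2 h3 h; lia.
    by have := below q qA h2 => h4; clear -h h4; lia.
  - by move: qp; rewrite (anti_injy hA qA pA h) eqxx.
pose A' := p' |: (A :\ p).
have hA' : antichain A'.
  apply/forall_inP => q1 h1; apply/forall_inP => q2 h2; apply/implyP => ne.
  move: h1 h2; rewrite !inE => /orP[/eqP e1'|/andP[q1p q1A]] /orP[/eqP e2'|/andP[q2p q2A]].
  - by rewrite e1' e2' eqxx in ne.
  - subst q1; have := side q2 q2A q2p; rewrite /gle /=.
    by case => -[h1 h2]; apply/negP => /andP[l1 l2]; rewrite /py /px /= in h1 h2 l1 l2 ut pu; clear -h1 h2 l1 l2 ut pu; lia.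
  - subst q2; have := side q1 q1A q1p; rewrite /gle /=.
    by case => -[h1 h2]; apply/negP => /andP[l1 l2]; rewrite /py /px /= in h1 h2 l1 l2 ut pu; clear -h1 h2 l1 l2 ut pu; lia.
  - exact: antiP hA q1A q2A ne.
have p'Ap : p' \notin A :\ p by rewrite in_setD1 (negbTE p'A) andbF.
have cA' : #|A'| = k.
  by rewrite cardsU1 p'Ap /= -cA (cardsD1 p A) pA.
have hA'k : A' \in antichains_k k by apply/akP.
have NPy : forall s, NP A' py s = NP (A :\ p) py s + (s <= t).
  by move=> s; rewrite NP_U1.
have NPAy : forall s, NP A py s = NP (A :\ p) py s + (s <= py p).
  by move=> s; rewrite -{1}(setD1K pA) NP_U1 ?setD11.
have NPx : forall s, NP A' px s = NP A px s.
  by move=> s; rewrite NP_U1 // -{2}(setD1K pA) NP_U1 ?setD11.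
exists A'.
  apply/and3P; split => //; apply/existsP; exists p; apply/existsP; exists p'; apply/and3P; split.
  - apply/eqP/setP => q; rewrite !inE; case: (boolP (q == p)) => [/eqP->|qp] /=.
      by rewrite pA (negbTE pp').
    by case: (q \in A); rewrite ?orbT ?andbF.
  - apply/eqP/setP => q; rewrite !inE; case: (boolP (q == p')) => [/eqP->|qp'] /=.
      by rewrite (negbTE p'A).
    by case: (q \in A); rewrite ?andbF.
  - rewrite /glt pp' /gle /= leqnn /=; move: pu ut; rewrite /py => -> /ltnW //.

have hpt : py p < t by rewrite pu.
split => //.
- move=> s; rewrite NPy; case: (leqP s (py p)) => h1.
    by have := NPAy s; rewrite h1 (leq_trans h1 (ltnW hpt)) => <-.
  case: (leqP s t) => h2 /=.
    have es : NP A py s = NP A py t.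
      apply: eq_card => q; rewrite !inE; case qA: (q \in A) => //=.
      case: (ltnP (py q) t) => h3.
        by have := below q qA h3; move=> h4; apply/negP => h5; clear -h1 h4 h5; lia.
      by rewrite (leq_trans h2 h3).
    have := NPAy s; rewrite leqNgt h1 /= addn0 => <-; rewrite es.
    by rewrite addn1; exact: leq_trans Pt (NP_mono _ _ h2).
  have := NPAy s; rewrite leqNgt (ltn_trans hpt h2) /= addn0 => <-. exact: dy.
- by move=> s; rewrite NPx.
- rewrite /W; have -> : \sum_(s < a.+1) NP A' px s = \sum_(s < a.+1) NP A px s.
    by apply: eq_bigr => s _; rewrite NPx.
  rewrite ltn_add2l; apply: (@sum_lt b.+1 (fun s => NP A py s) (fun s => NP A' py s) t).
  + exact: ltnW.
  + move=> s; rewrite NPy NPAy leq_add2l; case: (leqP s (py p)) => //= h.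
    by rewrite (leq_trans h (ltnW hpt)).
  + by rewrite NPy NPAy leqnn (leqNgt t (py p)) hpt /= addn0 addn1.
Qed.


Lemma W_le A B : (forall t, NP A px t <= NP B px t) -> (forall t, NP A py t <= NP B py t) -> W A <= W B.
Proof. by move=> dx dy; rewrite /W; apply: leq_add; apply: leq_sum => s _. Qed.

Lemma dom_le k A B : A \in antichains_k k -> B \in antichains_k k ->
  (forall t, NP A px t <= NP B px t) -> (forall t, NP A py t <= NP B py t) -> le_k k A B.
Proof.
move=> hAk hBk; have main : forall n A, W B - W A < n -> A \in antichains_k k ->
  (forall t, NP A px t <= NP B px t) -> (forall t, NP A py t <= NP B py t) -> le_k k A B.
  elim => [//|n IH] A' hn hA'k dx dy.
  case: (eqVneq A' B) => [->|neq]; first exact: connect0.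
  have [hA _] := akP _ _ hA'k; have [hB _] := akP _ _ hBk.
  have : (exists t, NP A' px t < NP B px t) \/ (exists t, NP A' py t < NP B py t).
    case: (classic (exists t, NP A' px t < NP B px t)) => h; [by left|right].
    apply: NNPP => h2; move/eqP: neq; apply; apply: eq_counts => // t; apply/eqP; rewrite eqn_leq.
    - rewrite dx /= leqNgt; apply/negP => lt; apply: h; by exists t.
    - rewrite dy /= leqNgt; apply/negP => lt; apply: h2; by exists t.
  case => -[t0 lt].
  - have [A1 hp [hA1k dx' dy' hW]] := step_x hA'k hBk dx dy lt.
    apply: connect_trans (connect1 hp) _; apply: IH => //.
    have := W_le dx' dy'; lia.
  - have [A1 hp [hA1k dy' dx' hW]] := step_y hA'k hBk dy dx lt.
    apply: connect_trans (connect1 hp) _; apply: IH => //.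
    have := W_le dx' dy'; lia.
by move=> dx dy; apply: (main (W B - W A).+1).
Qed.


Definition mem2 (D : {set G}) (r c : nat) := [exists q in D, (px q == r) && (py q == c)].

Lemma mem2E D q : mem2 D (px q) (py q) = (q \in D).
Proof.
apply/exists_inP/idP => [[q' h /andP[/eqP e1 /eqP e2]]|h]; last by exists q; rewrite ?eqxx.
by rewrite -(pair_eq e1 e2).
Qed.

Lemma mem2_bound D r c : mem2 D r c -> r < a /\ c < b.
Proof. by case/exists_inP => q _ /andP[/eqP <- /eqP <-]; rewrite /px /py !ltn_ord. Qed.

Lemma mem2_ferrers D r c r' c' : ferrers D -> mem2 D r c -> r' <= r -> c' <= c -> mem2 D r' c'.
Proof.
move=> hF h rr cc; have [ra cb] := mem2_bound h.
case/exists_inP: h => q qD /andP[/eqP e1 /eqP e2].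
have h1 : r' < a by lia.
have h2 : c' < b by lia.
apply/exists_inP; exists (Ordinal h1, Ordinal h2); last by rewrite /px /py /= !eqxx.
move/forallP: hF => /(_ (Ordinal h1, Ordinal h2)) /forallP /(_ q) /implyP; apply.
by rewrite qD andbT /gle /=; move: e1 e2; rewrite /px /py => -> ->; rewrite rr cc.
Qed.

Lemma down_max n (P : nat -> bool) : P 0 -> (forall s t, s <= t -> P t -> P s) ->
  (forall t, P t -> t < n) -> forall t, (t <= \max_(s < n | P s) s) = P t.
Proof.
move=> P0 dc bd t.
have n0 : 0 < n := bd 0 P0.
have [m hm e] := @eq_bigmax_cond _ [pred s : 'I_n | P s] (fun s => nat_of_ord s)
                   (ltac:(apply/card_gt0P; exists (Ordinal n0); by rewrite inE)).
have -> : \max_(s < n | P s) s = m by rewrite -e.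
apply/idP/idP => [tm|Pt]; first by apply: dc tm _; rewrite inE in hm.
by rewrite -e; apply: (leq_bigmax_cond (F := fun s : 'I_n => nat_of_ord s) (Ordinal (bd t Pt))).
Qed.

Lemma card_lt (T : finType) (S : {set T}) (f : T -> nat) s :
  {in S &, injective f} -> (forall z : T, z \in S -> f z < s) -> #|S| <= s.
Proof.
move=> inj hS; rewrite cardE -(size_map f) -(size_iota 0 s).
apply: uniq_leq_size.
  by rewrite map_inj_in_uniq ?enum_uniq // => z1 z2; rewrite !mem_enum; apply: inj.
move=> n /mapP [z]; rewrite mem_enum => /hS h ->.
by rewrite mem_iota; lia.
Qed.

Lemma count_dec k (g : nat -> nat) t s : (forall r r', r < r' < k -> g r' < g r) ->
  (s < #|[set r : 'I_k | t <= g r]|) = (s < k) && (t <= g s).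
Proof.
move=> dec; case: (boolP ((s < k) && (t <= g s))) => [/andP[sk ts]|hn].
  have hw : s.+1 <= k by [].
  have winj : injective (widen_ord hw) by move=> i j e; apply/val_inj; exact: (congr1 val e).
  have : #|[set widen_ord hw i | i : 'I_s.+1]| = s.+1 by rewrite card_imset // card_ord.
  move=> <-; apply: subset_leq_card; apply/subsetP => r /imsetP[i _ ->]; rewrite inE /=.
  have := ltn_ord i; rewrite ltnS leq_eqVlt => /orP[/eqP ->//|lt].
  by apply: leq_trans ts (ltnW (dec _ _ _)); rewrite lt.
apply/negbTE; rewrite -leqNgt; apply: (card_lt (f := fun r : 'I_k => nat_of_ord r)).
  by move=> i j _ _; apply: val_inj.
move=> r; rewrite inE => tr; rewrite ltnNge; apply/negP => sr.
move: hn; rewrite (leq_ltn_trans sr (ltn_ord r)) /=; move/negP; apply.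
move: sr; rewrite leq_eqVlt => /orP[/eqP ->//|lt].
by apply: leq_trans tr (ltnW (dec _ _ _)); rewrite lt ltn_ord.
Qed.


Section Surj.
Variables (k : nat) (D : {set G}).
Variable hk : k <= minn a b.
Variable hD : D \in diagrams_k k.

Lemma ka : k <= a. Proof. move: hk; lia. Qed.
Lemma kb : k <= b. Proof. move: hk; lia. Qed.
Lemma hF : ferrers D. Proof. by move: hD; rewrite unfold_in => /andP[]. Qed.
Lemma hdur : durfee D = k. Proof. by move: hD; rewrite unfold_in => /andP[_ /eqP]. Qed.

Lemma Dsq : has_square D k.
Proof.
have h0 : has_square D 0 by apply/and3P; split => //; apply/forallP => x; rewrite ltn0.
have [m hm e] := @eq_bigmax_cond _ [pred m : 'I_(minn a b).+1 | has_square D m]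
   (fun s => nat_of_ord s) (ltac:(apply/card_gt0P; exists ord0; by rewrite inE)).
have e' : durfee D = m.
  by rewrite /durfee -e; apply: eq_bigl => i; rewrite inE.
by rewrite -hdur e'; rewrite inE in hm.
Qed.

Lemma Dsq' r c : r < k -> c < k -> mem2 D r c.
Proof.
move=> rk ck; have /and3P[_ _ /forallP hs] := Dsq.
have h1 : r < a by have := ka; lia.
have h2 : c < b by have := kb; lia.
have := hs (Ordinal h1, Ordinal h2); rewrite /= rk ck /= => h.
by have := mem2E D (Ordinal h1, Ordinal h2); rewrite h.
Qed.

Lemma Dnot : ~~ mem2 D k k.
Proof.
apply/negP => h; have [k1 k2] := mem2_bound h.
have hs : has_square D k.+1.
  apply/and3P; split => //; apply/forallP => x; apply/implyP => /andP[x1 x2].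
  rewrite -mem2E; apply: mem2_ferrers hF h _ _; rewrite /px /py -ltnS //.
have hk1 : k.+1 < (minn a b).+1 by rewrite ltnS leq_min k1 k2.
have := leq_bigmax_cond (P := fun m : 'I_(minn a b).+1 => has_square D m) (F := fun m : 'I_(minn a b).+1 => nat_of_ord m) (Ordinal hk1) hs.
by rewrite -/(durfee D) hdur ltnn.
Qed.

Lemma Ddiag r : mem2 D r r = (r < k).
Proof.
apply/idP/idP => [h|h]; last exact: Dsq'.
rewrite ltnNge; apply/negP => kr1; move/negP: Dnot; apply; exact: (mem2_ferrers hF h kr1 kr1).
Qed.

Lemma Dcover r c : mem2 D r c -> (r < k) || (c < k).
Proof.
move=> h; rewrite !ltnNge -negb_and; apply/negP => /andP[kr1 kc1].
by move/negP: Dnot; apply; exact: (mem2_ferrers hF h kr1 kc1).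
Qed.

Definition yr r := \max_(t < b | mem2 D r (r + t)) t.
Definition xc c := \max_(t < a | mem2 D (c + t) c) t.

Lemma yr_spec r t : r < k -> (t <= yr r) = mem2 D r (r + t).
Proof.
move=> rk; rewrite /yr; apply: (down_max (P := fun t => mem2 D r (r + t))).
- by rewrite addn0; apply: Dsq'.
- move=> s t' st h; apply: mem2_ferrers hF h _ _ => //; lia.
- by move=> t' /mem2_bound [_ h]; lia.
Qed.

Lemma xc_spec c t : c < k -> (t <= xc c) = mem2 D (c + t) c.
Proof.
move=> ck; rewrite /xc; apply: (down_max (P := fun t => mem2 D (c + t) c)).
- by rewrite addn0; apply: Dsq'.
- move=> s t' st h; apply: mem2_ferrers hF h _ _ => //; lia.
- by move=> t' /mem2_bound [h _]; lia.
Qed.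

Lemma yr_bound r : r < k -> yr r < b.
Proof. by move=> rk; have := leqnn (yr r); rewrite yr_spec // => /mem2_bound[_ h]; lia. Qed.

Lemma xc_bound c : c < k -> xc c < a.
Proof. by move=> ck; have := leqnn (xc c); rewrite xc_spec // => /mem2_bound[h _]; lia. Qed.

Lemma yr_dec r r' : r < r' < k -> yr r' < yr r.
Proof.
move=> /andP[rr rk]; have := leqnn (yr r'); rewrite yr_spec // => h.
have : yr r' + (r' - r) <= yr r.
  rewrite yr_spec; last lia.
  apply: mem2_ferrers hF h _ _ => //; lia.
lia.
Qed.

Lemma xc_dec c c' : c < c' < k -> xc c' < xc c.
Proof.
move=> /andP[cc ck]; have := leqnn (xc c'); rewrite xc_spec // => h.
have : xc c' + (c' - c) <= xc c.
  rewrite xc_spec; last lia.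
  apply: mem2_ferrers hF h _ _ => //; lia.
lia.
Qed.

Definition pt (r : 'I_k) : G :=
  (insubd (Ordinal (leq_trans (ltn_ord r) ka)) (xc (k.-1 - r)),
   insubd (Ordinal (leq_trans (ltn_ord r) kb)) (yr r)).

Lemma px_pt r : px (pt r) = xc (k.-1 - r).
Proof. by rewrite /px /= val_insubd xc_bound //; have := ltn_ord r; lia. Qed.

Lemma py_pt r : py (pt r) = yr r.
Proof. by rewrite /py /= val_insubd yr_bound. Qed.

Lemma pt_inj : injective pt.
Proof.
move=> r r' e; have := congr1 py e; rewrite !py_pt => e2.
apply: val_inj; case: (ltngtP r r') => // h.
- by have := yr_dec (ltac:(rewrite h ltn_ord //) : r < r' < k); rewrite e2 ltnn.
- by have := yr_dec (ltac:(rewrite h ltn_ord //) : r' < r < k); rewrite e2 ltnn.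
Qed.

Definition Aset := [set pt r | r : 'I_k].

Lemma Aset_ak : Aset \in antichains_k k.
Proof.
apply/akP; split; last by rewrite card_imset ?card_ord //; exact: pt_inj.
apply/forall_inP => q1 /imsetP[r1 _ ->]; apply/forall_inP => q2 /imsetP[r2 _ ->].
apply/implyP => ne; rewrite /gle -/(px (pt r1)) -/(px (pt r2)) -/(py (pt r1)) -/(py (pt r2)).
rewrite !px_pt !py_pt.
have h1 := ltn_ord r1; have h2 := ltn_ord r2.
case: (ltngtP r1 r2) => h.
- by rewrite (leqNgt (yr r1)) (yr_dec (ltac:(rewrite h h2 //) : r1 < r2 < k)) andbF.
- have : xc (k.-1 - r2) < xc (k.-1 - r1).
    apply: xc_dec; apply/andP; split; lia.
  by move=> lt; rewrite (leqNgt (xc (k.-1 - r1))) lt.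
- by move: ne; rewrite (val_inj h) eqxx.
Qed.

Lemma NP_pt pi t : NP Aset pi t = #|[set r : 'I_k | t <= pi (pt r)]|.
Proof.
rewrite /NP -(card_imset _ pt_inj); apply: eq_card => q; rewrite inE.
apply/andP/imsetP => [[/imsetP[r _ ->] h]|[r hr ->]].
  by exists r; rewrite ?inE.
by split; [apply: imset_f | rewrite inE in hr].
Qed.

Lemma NP_y t : NP Aset py t = #|[set r : 'I_k | t <= yr r]|.
Proof. by rewrite NP_pt; apply: eq_card => r; rewrite !inE py_pt. Qed.

Lemma NP_x t : NP Aset px t = #|[set c : 'I_k | t <= xc c]|.
Proof.
rewrite NP_pt -[RHS](card_imset _ (@rev_ord_inj k)); apply: eq_card => r; rewrite inE px_pt.
apply/idP/imsetP => [h|[c hc ->]].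
  exists (rev_ord r); last by rewrite rev_ordK.
  by rewrite inE /=; have hr := ltn_ord r; have -> : k - r.+1 = k.-1 - r by lia.
rewrite inE in hc; rewrite /=; have hc2 := ltn_ord c; have -> : k.-1 - (k - c.+1) = c by lia.
by [].
Qed.

Lemma inD_iff q : (q \in D) = ((px q < k) && mem2 D (px q) (px q + (py q - px q)))
                            || ((py q < k) && mem2 D (py q + (px q - py q)) (py q)).
Proof.
case: (leqP (px q) (py q)) => h.
  rewrite (subnKC h) mem2E; have -> : px q - py q = 0 by lia.
  rewrite addn0 Ddiag andbb.
  case qD: (q \in D) => /=.
    by have := Dcover (ltac:(rewrite mem2E; exact: qD) : mem2 D (px q) (py q)); rewrite andbT.
  rewrite andbF orFb; apply/esym/negP => hy.
  by have := Dsq' (leq_ltn_trans h hy) hy; rewrite mem2E qD.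
rewrite (subnKC (ltnW h)) mem2E; have -> : py q - px q = 0 by lia.
rewrite addn0 Ddiag andbb.
case qD: (q \in D) => /=.
  by have := Dcover (ltac:(rewrite mem2E; exact: qD) : mem2 D (px q) (py q)); rewrite andbT orbC.
rewrite andbF orbF; apply/esym/negP => hx.
by have := Dsq' hx (ltn_trans h hx); rewrite mem2E qD.
Qed.

Lemma fmap_Aset : fmap Aset = D.
Proof.
apply/setP => q; rewrite inE NP_y NP_x.
rewrite (count_dec _ _ (fun r r' h => yr_dec h)) (count_dec _ _ (fun r r' h => xc_dec h)).
rewrite inD_iff; congr (_ || _).
  by case hx: (px q < k) => //=; rewrite yr_spec.
by case hy: (py q < k) => //=; rewrite xc_spec.
Qed.

End Surj.

End Basics.

Theorem corollary3p2 (a b k : nat) (hk : k <= minn a b) :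
  exists f : {set grid a b} -> {set grid a b},
    [/\ {in antichains_k k, forall A, f A \in diagrams_k k},
        {in diagrams_k k, forall D, exists2 A, A \in antichains_k k & f A = D},
        {in antichains_k k &, injective f}
      & {in antichains_k k &, forall A B, le_k k A B = (f A \subset f B)}].
Proof.
exists (@fmap a b); split.
- by move=> A hA; exact: fmap_diag hk hA.
- by move=> D hD; exists (Aset hk hD); [exact: Aset_ak | exact: fmap_Aset].
- move=> A B hA hB e.
  have [hA' _] := akP _ _ hA; have [hB' _] := akP _ _ hB.
  have s1 : fmap A \subset fmap B by rewrite e subxx.
  have s2 : fmap B \subset fmap A by rewrite e subxx.
  apply: eq_counts => // t; apply/eqP; rewrite eqn_leq.
    by rewrite (dom_x t hA hB hk s1) (dom_x t hB hA hk s2).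
  by rewrite (dom_y t hA hB hk s1) (dom_y t hB hA hk s2).
- move=> A B hA hB; apply/idP/idP; first exact: le_sub.
  move=> s; apply: dom_le => // t; [exact: dom_x hA hB hk s | exact: dom_y hA hB hk s].
Qed.
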